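(* Let $\mathcal{B}\subseteq\mathcal{C}$ be $*$-invariant subspaces of $\mathcal{A}$ with $1\in\mathcal{B}$, let $m\ge1$ with $\mathcal{B}^{[m]}\subseteq\mathcal{C}$, and let $L$ be a hermitian linear functional on $\mathcal{C}^2$ with $\mathcal{C}=\mathcal{B}+K_L(\mathcal{C})$. Put $\mathcal{K}:=K_L(\mathcal{C})\cap\mathcal{B}^{[1]}$. Then $\mathcal{K}^{[2m-1]}\cap\mathcal{C}\subseteq K_L(\mathcal{C})$.
   Context: $\mathcal{A}$ is a complex unital $*$-algebra with fixed generators $\{a_i:i\in I\}$, the set being closed under $*$. For a subspace $V$, $V^+:=V+\mathrm{Lin}\{a_iv:i\in I,v\in V\}$, $V^{[0]}=V$, $V^{[l+1]}=(V^{[l]})^+$. $\mathcal{C}^2:=\mathrm{Lin}\{ab:a,b\in\mathcal{C}\}$; $L$ hermitian means $L(b^* )=\overline{L(b)}$; $K_L(\mathcal{C}):=\{a\in\mathcal{C}: L(b^*a)=0\ \forall b\in\mathcal{C}\}$. *)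

(* Defs.v *)
From HB Require Import structures.
From mathcomp Require Import all_boot all_order all_algebra.
Set Implicit Arguments. Unset Strict Implicit. Unset Printing Implicit Defensive.
Import Order.TTheory GRing.Theory Num.Theory.
Local Open Scope ring_scope.

Section StarAlg.
Variables (C : numClosedFieldType) (A : algType C).

Definition is_star (star : A -> A) : Prop :=
  [/\ forall x, star (star x) = x,
      forall x y, star (x + y) = star x + star y,
      forall (c : C) x, star (c *: x) = c^* *: star x
    & forall x y, star (x * y) = star y * star x].

Definition subspace (V : A -> Prop) : Prop :=
  [/\ V 0, forall x y, V x -> V y -> V (x + y)
    & forall (c : C) x, V x -> V (c *: x)].

Definition star_invariant (star : A -> A) (V : A -> Prop) : Prop :=
  forall x, V x -> V (star x).

Definition lin (S : A -> Prop) : A -> Prop :=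
  fun x => forall W, subspace W -> (forall y, S y -> W y) -> W x.

Definition sumsp (V W : A -> Prop) : A -> Prop :=
  fun x => exists v w, [/\ V v, W w & x = v + w].

Definition subalgebra (W : A -> Prop) : Prop :=
  [/\ subspace W, W 1 & forall x y, W x -> W y -> W (x * y)].

Definition generated_by (I : Type) (a : I -> A) : A -> Prop :=
  fun x => forall W, subalgebra W -> (forall i, W (a i)) -> W x.

Definition splus (I : Type) (a : I -> A) (V : A -> Prop) : A -> Prop :=
  sumsp V (lin (fun x => exists i v, V v /\ x = a i * v)).

Fixpoint sbr (I : Type) (a : I -> A) (l : nat) (V : A -> Prop) : A -> Prop :=
  match l with
  | 0%N => V
  | l'.+1 => splus a (sbr a l' V)
  end.

Definition sq (V : A -> Prop) : A -> Prop :=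
  lin (fun x => exists u v, [/\ V u, V v & x = u * v]).

(* L : A -> C is a linear functional on the subspace D (values outside D irrelevant) *)
Definition linear_on (D : A -> Prop) (L : A -> C) : Prop :=
  (forall x y, D x -> D y -> L (x + y) = L x + L y) /\
  (forall (c : C) x, D x -> L (c *: x) = c * L x).

Definition hermitian_on (star : A -> A) (D : A -> Prop) (L : A -> C) : Prop :=
  forall b, D b -> L (star b) = (L b)^*.

Definition KL (star : A -> A) (L : A -> C) (V : A -> Prop) : A -> Prop :=
  fun x => V x /\ forall b, V b -> L (star b * x) = 0.

End StarAlg.

(* Main.v *)
Require Import Defs.
From HB Require Import structures.
From mathcomp Require Import all_boot all_order all_algebra.
From mathcomp Require Import zify.
Import Order.TTheory GRing.Theory Num.Theory.
Local Open Scope ring_scope.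

Lemma lin_sub {C : numClosedFieldType} {A : algType C} (S : A -> Prop) :
  subspace (lin S).
Proof.
split.
- by move=> W [] *.
- by move=> x y Hx Hy W HW HS; case: (HW) => _ H _; apply: H; [apply: Hx|apply: Hy].
- by move=> c x Hx W HW HS; case: (HW) => _ _ H; apply: H; apply: Hx.
Qed.

Lemma lin_in {C : numClosedFieldType} {A : algType C} (S : A -> Prop) x :
  S x -> lin S x.
Proof. by move=> Hx W _ HS; apply: HS. Qed.

Lemma sumsp_sub {C : numClosedFieldType} {A : algType C} (V W : A -> Prop) :
  subspace V -> subspace W -> subspace (sumsp V W).
Proof.
move=> [V0 VD VZ] [W0 WD WZ]; split.
- by exists 0, 0; split => //; rewrite addr0.
- move=> x y [v [w [Hv Hw ->]]] [v' [w' [Hv' Hw' ->]]].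
  exists (v + v'), (w + w'); split; [exact: VD|exact: WD|].
  by rewrite addrACA.
- move=> c x [v [w [Hv Hw ->]]]; exists (c *: v), (c *: w); split;
  [exact: VZ|exact: WZ|by rewrite scalerDr].
Qed.

Lemma sbr_sub {C : numClosedFieldType} {A : algType C} {I : Type} (a : I -> A)
  (V : A -> Prop) k : subspace V -> subspace (sbr a k V).
Proof.
move=> HV; elim: k => [|k IH] //=.
by apply: sumsp_sub => //; apply: lin_sub.
Qed.

Lemma splus_l {C : numClosedFieldType} {A : algType C} {I : Type} (a : I -> A)
  (V : A -> Prop) x : V x -> splus a V x.
Proof.
move=> Hx; exists x, 0; split => //; last by rewrite addr0.
by case: (lin_sub (fun x => exists i v, V v /\ x = a i * v)).
Qed.

Lemma splus_a {C : numClosedFieldType} {A : algType C} {I : Type} (a : I -> A)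
  (V : A -> Prop) i v : subspace V -> V v -> splus a V (a i * v).
Proof.
move=> [V0 _ _] Hv; exists 0, (a i * v); split => //; last by rewrite add0r.
by apply: lin_in; exists i, v.
Qed.

Lemma splus_ind {C : numClosedFieldType} {A : algType C} {I : Type} (a : I -> A)
  (V W : A -> Prop) x : subspace W -> (forall y, V y -> W y) ->
  (forall i v, V v -> W (a i * v)) -> splus a V x -> W x.
Proof.
move=> HW HVW Ha [v [w [Hv Hw ->]]].
case: (HW) => _ WD _; apply: WD; first exact: HVW.
apply: Hw => // y [i [u [Hu ->]]]; exact: Ha.
Qed.

Lemma sbr_le {C : numClosedFieldType} {A : algType C} {I : Type} (a : I -> A)
  (V : A -> Prop) k l x : (k <= l)%N -> sbr a k V x -> sbr a l V x.
Proof.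
elim: l => [|l IH]; first by rewrite leqn0 => /eqP ->.
rewrite leq_eqVlt => /orP [/eqP -> //|]; rewrite ltnS => Hkl Hx /=.
by apply: splus_l; apply: IH.
Qed.

Theorem lemma3p3 (C : numClosedFieldType) (A : algType C) (star : A -> A)
    {I : Type} (a : I -> A)
    (Hstar : is_star star)
    (Hgen_star : forall i, exists j, star (a i) = a j)
    (Hgen : forall x, generated_by a x)
    (B Cs : A -> Prop)
    (HB : subspace B) (HBstar : star_invariant star B)
    (HC : subspace Cs) (HCstar : star_invariant star Cs)
    (HBC : forall x, B x -> Cs x) (HB1 : B 1)
    (m : nat) (Hm : (1 <= m)%N)
    (HBm : forall x, sbr a m B x -> Cs x)
    (L : A -> C) (HLlin : linear_on (sq Cs) L) (HLherm : hermitian_on star (sq Cs) L)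
    (HCdec : forall x, Cs x <-> sumsp B (KL star L Cs) x) :
  let K := fun x => KL star L Cs x /\ sbr a 1 B x in
  forall x, sbr a (2 * m - 1) K x -> Cs x -> KL star L Cs x.
Proof.
move=> K.
case: Hstar => sK sD sZ sM.
case: HLlin => LD LZ.
case: (HC) => C0 CD CZ.
have sqM u v : Cs u -> Cs v -> sq Cs (u * v).
  by move=> Hu Hv; apply: lin_in; exists u, v.
have sq0 : sq Cs 0 by case: (lin_sub (fun x => exists u v, [/\ Cs u, Cs v & x = u * v])).
have L0 : L 0 = 0 by rewrite -(scale0r (0 : A)) LZ // mul0r.
have Hsta i : exists j, star (a j) = a i.
  by case: (Hgen_star i) => j Hj; exists j; rewrite -Hj sK.
have KLleft b x : KL star L Cs b -> Cs x -> L (star b * x) = 0.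
  move=> [Hb Hb0] Hx.
  have := HLherm (star b * x) (sqM _ _ (HCstar _ Hb) Hx).
  rewrite sM sK Hb0 // => /(congr1 (fun z => z^*)).
  by rewrite conjCK conjC0 => <-.
have BmC k x : (k <= m)%N -> sbr a k B x -> Cs x.
  by move=> Hk Hx; apply: HBm; apply: sbr_le Hx.
have KLofC x : Cs x -> (forall b, B b -> L (star b * x) = 0) -> KL star L Cs x.
  move=> Hx HBx; split => // b /HCdec [b1 [b2 [Hb1 Hb2 ->]]].
  have Cb2 : Cs b2 by case: Hb2.
  rewrite sD mulrDl LD.
  - by rewrite HBx // KLleft // addr0.
  - by apply: sqM => //; apply: HCstar; apply: HBC.
  - by apply: sqM => //; apply: HCstar.
have KLsub : subspace (KL star L Cs).
  split.
  - by split => // b Hb; rewrite mulr0.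
  - move=> x y [Hx Hx0] [Hy Hy0]; split; first exact: CD.
    move=> b Hb; rewrite mulrDr LD ?Hx0 ?Hy0 ?addr0 //; apply: sqM => //; exact: HCstar.
  - move=> c x [Hx Hx0]; split; first exact: CZ.
    move=> b Hb; rewrite -scalerAr LZ ?Hx0 ?mulr0 //; apply: sqM => //; exact: HCstar.
have Kstep i v : KL star L Cs v -> Cs (a i * v) -> KL star L Cs (a i * v).
  move=> [Hv Hv0] Hav; apply: KLofC => // b Hb.
  case: (Hsta i) => j Hj.
  rewrite mulrA -Hj -sM; apply: Hv0; apply: (BmC 1%N) => //.
  exact: splus_a.
have phase1 k : (k <= m - 1)%N -> forall x, sbr a k K x ->
    KL star L Cs x /\ sbr a k.+1 B x.
  elim: k => [|k IH] Hk x; first by [].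
  have Psub : subspace (fun x => KL star L Cs x /\ sbr a k.+2 B x).
    case: KLsub => K0 KD KZ; case: (sbr_sub a B k.+2 HB) => S0 SD SZ.
    split => //.
    - by move=> y z [? ?] [? ?]; split; [apply: KD|apply: SD].
    - by move=> c y [? ?]; split; [apply: KZ|apply: SZ].
  move=> Hx; apply: (splus_ind a (sbr a k K) _ x Psub _ _ Hx).
  - move=> y /IH [|Hy1 Hy2]; first by apply: ltnW.
    by split => //; apply: splus_l.
  - move=> i v /IH [|Hv1 Hv2]; first by apply: ltnW.
    have Hs : sbr a k.+2 B (a i * v) := splus_a a (sbr a k.+1 B) i v (sbr_sub a B k.+1 HB) Hv2.
    split => //; apply: Kstep => //; apply: (BmC k.+2) => //.
    by move: Hk Hm; clear; lia.
pose Z := lin (fun z => exists u v, [/\ Cs u, KL star L Cs v & z = star u * v]).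
have HZ z : Z z -> L z = 0.
  move=> Hz; suff : sq Cs z /\ L z = 0 by case.
  apply: (Hz (fun z => sq Cs z /\ L z = 0)).
  - split; first by split.
    + move=> x y [Hx Lx] [Hy Ly]; split; first by case: (lin_sub (fun x => exists u v, [/\ Cs u, Cs v & x = u * v])) => _ H _; apply: H.
      by rewrite LD // Lx Ly addr0.
    + move=> c x [Hx Lx]; split; first by case: (lin_sub (fun x => exists u v, [/\ Cs u, Cs v & x = u * v])) => _ _ H; apply: H.
      by rewrite LZ // Lx mulr0.
  - move=> y [u [v [Hu [Hv Hv0] ->]]]; split; first by apply: sqM => //; apply: HCstar.
    exact: Hv0.
case: (lin_sub (fun z => exists u v, [/\ Cs u, KL star L Cs v & z = star u * v])) => Z0 ZD ZZ.
pose T j x := forall b, sbr a (m - j) B b -> Z (star b * x).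
have phase2 j : (j <= m)%N -> forall x, sbr a (m - 1 + j) K x -> T j x.
  elim: j => [|j IH] Hj x.
  - rewrite addn0 => Hx b; rewrite subn0 => Hb.
    have [Hx1 _] := phase1 (m - 1)%N (leqnn _) x Hx.
    by apply: lin_in; exists b, x; split => //; apply: HBm.
  - have Tsub : subspace (T j.+1).
      split.
      + by move=> b _; rewrite mulr0.
      + by move=> y z Hy Hz b Hb; rewrite mulrDr; apply: ZD; [apply: Hy|apply: Hz].
      + by move=> c y Hy b Hb; rewrite -scalerAr; apply: ZZ; apply: Hy.
    rewrite addnS => Hx.
    apply: (splus_ind a (sbr a (m - 1 + j) K) _ x Tsub _ _ Hx).
    + move=> y /IH Hy b Hb; apply: Hy; first exact: ltnW.
      by apply: sbr_le Hb; lia.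
    + move=> i v /IH Hv b Hb.
      case: (Hsta i) => j' Hj'.
      rewrite mulrA -Hj' -sM; apply: Hv; first exact: ltnW.
      have -> : (m - j)%N = (m - j.+1).+1 by lia.
      exact: (splus_a a _ j' b (sbr_sub a B _ HB) Hb).
move=> x Hx Cx; apply: KLofC => // b Hb.
have Hx' : sbr a (m - 1 + m) K x by have -> : (m - 1 + m = 2 * m - 1)%N by lia.
apply: HZ; apply: (phase2 m (leqnn _) x Hx').
by rewrite subnn.
Qed.
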